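(* Let $\mathcal H$ be the Hessian of an admissible Hamiltonian. Then for all $x,y\in\mathbb R^{2n}$, $J(x)\,\mathcal H\,J(y)=J(y)\,\mathcal H\,J(x)$.
   Context: Fix an integer $n\ge 2$. Points of $\mathbb R^{2n}$ are $x=(x_1,\dots,x_{2n})^{T}$; write $u=(x_1,\dots,x_n)^T$. Let $X(u)$ be the $n\times n$ matrix with entries $X(u)_{ij}=x_{k}$ where $k\in\{1,\dots,n\}$, $k\equiv i+j-1 \pmod n$, and let $J(x)=\begin{pmatrix}0&X(u)\\-X(u)&0\end{pmatrix}$. Let $\mathcal P$ be the $n\times n$ cyclic shift matrix ($\mathcal P_{i,i+1}=1$ for $1\le i\le n-1$, $\mathcal P_{n,1}=1$, all other entries $0$) and $A=\begin{pmatrix}\mathcal P&0\\0&\mathcal P\end{pmatrix}$. An admissible Hamiltonian is a homogeneous quadratic form $H(x)=\tfrac12 x^T\mathcal H x$ with a constant symmetric matrix $\mathcal H=\nabla^2H$ satisfying $A\mathcal H=\mathcal H A^T$. *)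

(* Defs.v *)
(* The statement is purely algebraic; we state it over an
   arbitrary real field R (R^{2n} with R = the reals is an instance). *)
From HB Require Import structures.
From mathcomp Require Import all_boot all_order all_algebra.
Set Implicit Arguments. Unset Strict Implicit. Unset Printing Implicit Defensive.
Import Order.TTheory GRing.Theory Num.Theory.
Local Open Scope ring_scope.

(* Indices are 0-based: paper index i in {1..n} corresponds to i-1 : 'I_n. *)

(* indexed by nat; out-of-range indices never occur below (value 0 there). *)
Definition ufirst (R : nzRingType) (n : nat) (x : 'cV[R]_(n + n)) (k : nat) : R :=
  if @insub nat (fun k => k < n)%N 'I_n k is Some o then x (lshift n o) 0 else 0.

(* X(u)_{ij} = x_k with k = i + j - 1 (mod n), 1-based; 0-based: k0 = (i0 + j0) mod n. *)
Definition Xmat (R : nzRingType) (n : nat) (x : 'cV[R]_(n + n)) : 'M[R]_n :=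
  \matrix_(i < n, j < n)
     ufirst x (((i : nat) + j) %% n)%N.

Definition Jmat (R : nzRingType) (n : nat) (x : 'cV[R]_(n + n)) : 'M[R]_(n + n) :=
  block_mx 0 (Xmat x) (- Xmat x) 0.

(* cyclic shift: P_{i,i+1} = 1 (1<=i<=n-1), P_{n,1} = 1; 0-based: P i j = [j == (i+1) mod n]. *)
Definition Pshift (R : nzRingType) (n : nat) : 'M[R]_n :=
  \matrix_(i < n, j < n) ((j == (i.+1 %% n)%N :> nat)%:R).

Definition Amat (R : nzRingType) (n : nat) : 'M[R]_(n + n) :=
  block_mx (Pshift R n) 0 0 (Pshift R n).

Definition admissible_hessian (R : nzRingType) (n : nat) (H : 'M[R]_(n + n)) : Prop :=
  H^T = H /\ Amat R n *m H = H *m (Amat R n)^T.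

(* Main.v *)
Require Import Defs.
From mathcomp Require Import ring.
From HB Require Import structures.
From mathcomp Require Import all_boot all_order all_algebra.
Import Order.TTheory GRing.Theory Num.Theory.
Local Open Scope ring_scope.

Section S.
Variables (R : comNzRingType) (m : nat).
Local Notation n := m.+2.

Lemma valD (a b : 'I_n) : val (a + b) = ((a + b) %% n)%N.
Proof. by []. Qed.

Lemma XmatE (x : 'cV[R]_(n + n)) (a b : 'I_n) : Xmat x a b = x (lshift n (a + b)) 0.
Proof.
rewrite mxE /ufirst; case: insubP => [o _ ho|]; last by rewrite ltn_pmod.
by congr (x (lshift n _) 0); apply: val_inj; rewrite /= ho.
Qed.

Lemma sum_delta (F : 'I_n -> R) (k : 'I_n) :
  \sum_c ((c == k)%:R * F c) = F k.
Proof.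
rewrite (bigD1 k) //= eqxx mul1r big1 ?addr0 // => c /negbTE ->; by rewrite mul0r.
Qed.

Lemma hankel (M : 'M[R]_n) : Pshift R n *m M = M *m (Pshift R n)^T ->
  forall a b, M a b = M 0 (a + b).
Proof.
move=> E.
have step (a b : 'I_n) : M (a + 1) b = M a (b + 1).
  have := congr1 (fun N : 'M[R]_n => N a b) E; rewrite !mxE.
  rewrite (eq_bigr (fun c => ((c == a + 1)%:R * M c b))); last first.
    move=> c _; rewrite mxE; congr (_%:R * _).
    by rewrite -val_eqE /= ?modnDmr ?addn1.
  rewrite sum_delta => ->.
  rewrite (eq_bigr (fun c => ((c == b + 1)%:R * M a c))) ?sum_delta //.
  move=> c _; rewrite !mxE mulrC; congr (_%:R * _).
  by rewrite -val_eqE /= ?modnDmr ?addn1.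
have gen k : forall a b, M (a + k%:R) b = M a (b + k%:R).
  elim: k => [|k IH] a b; first by rewrite !addr0.
  by rewrite -natr1 !addrA step IH -!addrA (addrC 1).
move=> a b.
have -> : a = (val a)%:R :> 'I_n by apply: val_inj; rewrite /= Zp_nat /= modn_small.
by rewrite -[X in M X _]add0r gen addrC.
Qed.

Lemma sumshift (F : 'I_n -> R) (k : 'I_n) : \sum_a F a = \sum_a F (k + a).
Proof. exact: (reindex_inj (addrI k)). Qed.

Lemma key (f1 f2 f3 : 'I_n -> R) (i j : 'I_n) :
  \sum_b (\sum_a f1 (i + a) * f2 (a + b)) * f3 (b + j)
  = \sum_b (\sum_a f3 (i + a) * f2 (a + b)) * f1 (b + j).
Proof.
suff E : forall g1 g3 : 'I_n -> R, \sum_b (\sum_a g1 (i + a) * f2 (a + b)) * g3 (b + j)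
  = \sum_b \sum_a g1 a * f2 (a + b - i - j) * g3 b.
  rewrite !E exchange_big /=; apply: eq_bigr => b _; apply: eq_bigr => a _.
  by rewrite [b + a]addrC mulrC [f1 b * _]mulrC mulrA.
move=> g1 g3; rewrite (sumshift _ (- j)); apply: eq_bigr => b _.
rewrite big_distrl (sumshift _ (- i)) /=; apply: eq_bigr => a _.
congr (_ * f2 _ * g3 _); [by rewrite addNKr | by rewrite addrACA addrC addrA | by rewrite addrC addNKr].
Qed.

Lemma XMY (x y : 'cV[R]_(n + n)) (M : 'M[R]_n) :
  Pshift R n *m M = M *m (Pshift R n)^T ->
  Xmat x *m M *m Xmat y = Xmat y *m M *m Xmat x.
Proof.
move=> /hankel hM; apply/matrixP => i j; rewrite !mxE.
have E z w : \sum_b (Xmat z *m M) i b * Xmat w b j =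
  \sum_b (\sum_a (fun c => z (lshift n c) 0) (i + a) * (fun c => M 0 c) (a + b))
     * (fun c => w (lshift n c) 0) (b + j).
  apply: eq_bigr => b _; rewrite mxE XmatE; congr (_ * _).
  by apply: eq_bigr => a _; rewrite XmatE [M a b]hM.
rewrite (E x y) (E y x); exact: (key (fun c => x (lshift n c) 0) (fun c => M 0 c) (fun c => y (lshift n c) 0) i j).
Qed.
End S.

Theorem mainTheorem19 (R : realFieldType) (n : nat) (hn : (2 <= n)%N)
  (H : 'M[R]_(n + n)) (hH : admissible_hessian H)
  (x y : 'cV[R]_(n + n)) :
  Jmat x *m H *m Jmat y = Jmat y *m H *m Jmat x.
Proof.
case: n hn H hH x y => [|[|m]] // _ H [_ hA] x y.
rewrite -(submxK H) in hA *.
move: hA; rewrite /Amat tr_block_mx !trmx0 !mulmx_block !mul0mx !mulmx0 !addr0 !add0r.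
move=> /eq_block_mx [h11 h12 h21 h22].
rewrite !mulNmx !mulmxN ?opprK.
by rewrite (XMY _ _ x y _ h11) (XMY _ _ x y _ h12) (XMY _ _ x y _ h21) (XMY _ _ x y _ h22).
Qed.
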